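(* Let $k\subset L$ be a finite cyclic field extension, with $r:=[L:k]=\prod_{i=1}^mp_i^{\alpha_i}$ where the $p_i$ are distinct primes and $\alpha_i\geq 1$. Let $\mathbb D_r$ be the set of positive divisors of $r$ and $\mathcal A$ the set of atoms of $[k,L]$. Then: (1) For each $i\in\{1,\ldots,m\}$ there is a unique $A_i\in\mathcal A$ with $[A_i:k]=p_i$; and $T\in[k,L]$ lies in $\mathcal A$ if and only if $[T:k]=p_i$ for some $i$. (2) $\mathcal S[k,L]=\prod_{i=1}^mA_i$. (3) Let $\alpha:=\sup\{\alpha_i\}$ and let $\{S_j\}_{j=0}^n$ be the Loewy series of $k\subset L$. For $j\in\{0,\ldots,n\}$, $[S_j:k]=\prod_{i=1}^mp_i^{\beta_i}$ where $\beta_i=\alpha_i$ if $\alpha_i<j$ and $\beta_i=j$ if $\alpha_i\geq j$. Moreover, $T\in[k,L]$ is an atom of $[S_j,S_{j+1}]$ if and only if $[T:k]=\prod_{i=1}^mp_i^{\gamma_i}$ where there is an index $i_0$ with $\beta_{i_0}<\alpha_{i_0}$ such that $\gamma_{i_0}=\beta_{i_0}+1$ and $\gamma_i=\beta_i$ for $i\neq i_0$. In particular $\alpha=n$. (4) $S_j\subset S_{j+1}$ is Boolean for each $j\in\{0,\ldots,n-1\}$. (5) For $T\in[k,L]$ with $T\neq k$: $T$ is $\Pi$-irreducible in $[k,L]$ if and only if $[T:k]=p_i^{\beta}$ for some $i\in\{1,\ldots,m\}$ and some $\beta\in\{1,\ldots,\alpha_i\}$. (6) $|[k,L]|=\mathrm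 d([L:k])=\prod_{i=1}^m(\alpha_i+1)=|\mathbb D_r|$, where $\mathrm d$ is the number of divisors. If $\mathcal A_j$ denotes the set of atoms of $[S_j,S_{j+1}]$, then $\ell[k,L]=\sum_{j=0}^{\alpha-1}|\mathcal A_j|=\sum_{i=1}^m\alpha_i$, which is the number of $\Pi$-irreducible elements of $[k,L]$ different from $k$. (7) The following are equivalent: (a) $k\subset L$ is a $\mathcal P$-extension; (b) $k\subset L$ is either Boolean or a chain; (c) either $m=1$ or $\alpha=1$.
   Context: For a field extension $k\subseteq L$, $[k,L]$ is the lattice of intermediate fields (meet = intersection, join = compositum $TU$). $K\subset K'$ is minimal if $[K,K']=\{K,K'\}$; an atom of $[K,K'']$ is $K'$ with $K\subset K'$ minimal and $K'\subseteq K''$. The socle $\mathcal S[K,L]$ is the compositum of all atoms of $[K,L]$; the Loewy series of $k\subset L$ is $S_0=k$, $S_{j+1}=\mathcal S[S_j,L]$ while $S_j\neq L$, with $n$ least such that $S_n=L$. $\ell[k,L]$ is the supremum of lengths of chains in $[k,L]$. The extension $K\subseteq K'$ is Boolean if $[K,K']$ is a distributive lattice in which every element $V$ has a complement $V'$ ($V\cap V'=K$, $VV'=K'$). $k\subset L$ is a $\mathcal P$-extension if $[k,L]=\bigcup_{j=0}^{n-1}[S_j,S_{j+1}]$. An element $T\in[k,L]$ is $\Pi$-irreducible if $T=T_1T_2$ with $T_1,T_2\in[k,L]$ implies $T=T_1$ or $T=T_2$. *)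

(* Defs.v *)
From HB Require Import structures.
From mathcomp Require Import all_boot all_order all_algebra all_fingroup all_solvable all_field.
From Stdlib Require Import ClassicalEpsilon.
Set Implicit Arguments. Unset Strict Implicit. Unset Printing Implicit Defensive.
Import GRing.Theory.
Local Open Scope ring_scope.

(* The interval [K, E] consists of the subfields T of L with K <= T <= E;
   meet = intersection (T :&: U)%AS, join = compositum (T * U)%AS. *)
Section FieldLattice.
Variables (F : fieldType) (L : fieldExtType F).
Implicit Types K E T U V : {subfield L}.

Definition in_interval K E T : Prop := (K <= T)%VS /\ (T <= E)%VS.

Definition sub_strict K E : Prop := (K <= E)%VS /\ K <> E.

Definition minimal_ext K K' : Prop :=
  sub_strict K K' /\ forall T, in_interval K K' T -> T = K \/ T = K'.

Definition atom K E A : Prop := minimal_ext K A /\ (A <= E)%VS.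

(* S is the compositum of all atoms of [K, E] (the compositum of the empty
   family being K): the smallest subfield containing K and all atoms. *)
Definition is_socle K E S : Prop :=
  (K <= S)%VS /\ (forall A, atom K E A -> (A <= S)%VS) /\
  (forall T, (K <= T)%VS -> (forall A, atom K E A -> (A <= T)%VS) -> (S <= T)%VS).

Definition socle K E : {subfield L} :=
  epsilon (inhabits K) (is_socle K E).

Fixpoint loewy K E (j : nat) : {subfield L} :=
  match j with
  | 0 => K
  | j'.+1 => socle (loewy K E j') E
  end.

Definition loewy_length K E (n : nat) : Prop :=
  loewy K E n = E /\ forall j, (j < n)%N -> loewy K E j <> E.

Definition boolean_ext K E : Prop :=
  (forall T U V, in_interval K E T -> in_interval K E U -> in_interval K E V ->
     (T :&: (U * V))%AS = ((T :&: U) * (T :&: V))%AS /\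
     (T * (U :&: V))%AS = ((T * U) :&: (T * V))%AS) /\
  (forall V, in_interval K E V ->
     exists V', in_interval K E V' /\ (V :&: V')%AS = K /\ (V * V')%AS = E).

Definition chain_ext K E : Prop :=
  forall T U, in_interval K E T -> in_interval K E U -> (T <= U)%VS \/ (U <= T)%VS.

Definition P_ext K E : Prop :=
  exists n, loewy_length K E n /\
    forall T, in_interval K E T ->
      exists j, (j < n)%N /\ in_interval (loewy K E j) (loewy K E j.+1) T.

Definition pi_irreducible K E T : Prop :=
  forall T1 T2, in_interval K E T1 -> in_interval K E T2 ->
    T = (T1 * T2)%AS -> T = T1 \/ T = T2.

Definition has_chain K E (l : nat) : Prop :=
  exists c : nat -> {subfield L},
    (forall i, (i <= l)%N -> in_interval K E (c i)) /\
    (forall i, (i < l)%N -> sub_strict (c i) (c i.+1)).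

Definition lattice_length K E (l : nat) : Prop :=
  has_chain K E l /\ forall l', has_chain K E l' -> (l' <= l)%N.

Definition card_subfields (P : {subfield L} -> Prop) (c : nat) : Prop :=
  exists s : seq {subfield L}, uniq s /\ (forall T, T \in s <-> P T) /\ size s = c.

End FieldLattice.

(* Main.v *)
Require Import Defs.
From HB Require Import structures.
From mathcomp Require Import all_boot all_order all_algebra all_fingroup all_solvable all_field.
From mathcomp Require Import zify.
From Stdlib Require Import ClassicalEpsilon.
Set Implicit Arguments. Unset Strict Implicit. Unset Printing Implicit Defensive.
Definition Dp (s : seq nat) (v : nat -> nat) := (\prod_(p <- s) p ^ v p)%N.

Lemma Dp_cons p s v : Dp (p :: s) v = (p ^ v p * Dp s v)%N.
Proof. by rewrite /Dp big_cons. Qed.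

Lemma Dp_gt0 s v : all prime s -> 0 < Dp s v.
Proof.
elim: s => [|p s IH] /=; first by rewrite /Dp big_nil.
case/andP=> pp /IH h; rewrite Dp_cons muln_gt0 h expn_gt0 prime_gt0 //.
Qed.

Lemma logn_Dp s v q : uniq s -> all prime s ->
  logn q (Dp s v) = if q \in s then v q else 0.
Proof.
elim: s => [|p s IH] /=; first by rewrite /Dp big_nil logn1.
case/andP=> ps us /andP[pp aps].
rewrite Dp_cons lognM ?Dp_gt0 ?expn_gt0 ?prime_gt0 // lognX logn_prime //.
rewrite IH // in_cons; case: eqP => [->|_] /=; last by rewrite muln0.
by rewrite (negbTE ps) muln1 addn0.
Qed.

Lemma Dp_log r d : 0 < r -> d %| r -> Dp (primes r) (logn^~ d) = d.
Proof.
move=> r0 dr; have d0 := dvdn_gt0 r0 dr.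
apply: eqn_from_log; rewrite ?Dp_gt0 ?all_prime_primes // => q.
rewrite logn_Dp ?primes_uniq ?all_prime_primes //.
case: ifP => // qr; apply/esym/eqP; rewrite -leqn0 leqNgt logn_gt0.
apply/negP=> qd; move: qr; rewrite mem_primes r0; move: qd.
by rewrite mem_primes => /and3P[-> _ qd]; rewrite (dvdn_trans qd dr).
Qed.

Lemma Dp_dvd s v w : {in s, forall p, v p <= w p} -> Dp s v %| Dp s w.
Proof.
elim: s => [|p s IH] h; first by rewrite /Dp !big_nil.
rewrite !Dp_cons dvdn_mul ?dvdn_exp2l ?h ?mem_head // IH // => q qs.
by apply: h; rewrite in_cons qs orbT.
Qed.

Lemma Dp_eq s v w : uniq s -> all prime s ->
  (Dp s v = Dp s w) <-> {in s, v =1 w}.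
Proof.
move=> us ps; split=> [h q qs | h].
  by have := logn_Dp v q us ps; rewrite h logn_Dp // qs.
by apply: eq_big_seq => p /h ->.
Qed.

Fixpoint dl (s : seq nat) (a : nat -> nat) : seq nat :=
  if s is p :: s' then [seq (p ^ i * d)%N | i <- iota 0 (a p).+1, d <- dl s' a]
  else [:: 1%N].

Lemma dl_cons p s a : dl (p :: s) a = [seq (p ^ i * d)%N | i <- iota 0 (a p).+1, d <- dl s a].
Proof. by []. Qed.
Arguments dl : simpl never.

Lemma size_dl s a : size (dl s a) = (\prod_(p <- s) (a p).+1)%N.
Proof.
elim: s => [|p s IH]; first by rewrite big_nil.
rewrite big_cons -IH -(size_iota 0 (a p).+1).
exact: (size_allpairs (fun i d => (p ^ i * d)%N)).
Qed.

Lemma mem_dl s a d : uniq s ->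
  (d \in dl s a) <-> exists v, {in s, forall p, v p <= a p} /\ d = Dp s v.
Proof.
elim: s d => [|p s IH] d.
  move=> _; rewrite inE; split=> [/eqP ->|[v [_ ->]]]; last by rewrite /Dp big_nil.
  by exists (fun _ => 0%N); split=> //; rewrite /Dp big_nil.
rewrite dl_cons [uniq _]/= => /andP[ps us]; split.
  case/allpairsP=> [[i e] [ii ee ->]]; rewrite mem_iota /= in ii; simpl in ee |- *.
  have [v [hv ->]] := (IH e us).1 ee.
  exists (fun q => if q == p then i else v q); split.
    move=> q; rewrite in_cons; case: eqP => [-> _|_ /= qs]; last exact: hv.
    by move: ii; rewrite ltnS.
  rewrite Dp_cons eqxx; congr (_ * _)%N; apply: eq_big_seq => q qs.
  by case: eqP => // eqp; rewrite -eqp qs in ps.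
case=> v [hv ->]; apply/allpairsP; exists (v p, Dp s v); split.
- by rewrite mem_iota /= ltnS hv ?mem_head.
- apply/(IH _ us); exists v; split=> // q qs; apply: hv; by rewrite in_cons qs orbT.
- by rewrite Dp_cons.
Qed.

Lemma uniq_dl s a : uniq s -> all prime s -> uniq (dl s a).
Proof.
elim: s => [|p s IH] // /andP[ps us] /andP[pp aps].
rewrite dl_cons; apply: allpairs_uniq; rewrite ?iota_uniq ?IH //.
move=> [i d] [j e] H1 H2.
case/allpairsP: H1 => [[i1 d1] [_ hd1 [-> ->]]].
case/allpairsP: H2 => [[j1 e1] [_ he1 [-> ->]]] /= eq1.
have [v [_ dv]] := (mem_dl a d1 us).1 hd1.
have [w [_ ew]] := (mem_dl a e1 us).1 he1.
have lp x u : logn p (p ^ x * Dp s u) = x.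
  rewrite lognM ?Dp_gt0 ?expn_gt0 ?prime_gt0 // lognX logn_prime // eqxx.
  by rewrite logn_Dp // (negbTE ps) muln1 addn0.
have eij : i1 = j1 by rewrite -(lp i1 v) -dv eq1 ew lp.
subst j1; congr (_, _); apply/eqP.
have h0 : 0 < p ^ i1 by rewrite expn_gt0 prime_gt0.
by rewrite -(eqn_pmul2l h0) eq1.
Qed.

Lemma size_divisors r : 0 < r ->
  size (divisors r) = (\prod_(p <- primes r) (logn p r).+1)%N.
Proof.
move=> r0; rewrite -size_dl; apply: perm_size.
apply: uniq_perm; rewrite ?divisors_uniq ?uniq_dl ?primes_uniq ?all_prime_primes //.
move=> d; rewrite -dvdn_divisors //; apply/idP/idP.
  move=> dr; apply/(mem_dl _ _ (primes_uniq r)); exists (logn^~ d); split.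
    by move=> p _; apply: dvdn_leq_log.
  by rewrite Dp_log.
case/(mem_dl _ _ (primes_uniq r))=> v [hv ->].
by rewrite -{2}(Dp_log r0 (dvdnn r)); apply: Dp_dvd.
Qed.

Section Cyc.
Variables (F : fieldType) (L : splittingFieldType F) (K E : {subfield L}).
Hypotheses (sKE : (K <= E)%VS) (nKE : K <> E) (galKE : galois K E)
  (cycG : cyclic 'Gal(E / K)).

Local Notation r := (\dim_K E).
Local Notation P := (primes (\dim_K E)).
Local Notation I := (in_interval K E).

Lemma dimKT_mul (A T U : {subfield L}) : (A <= T)%VS -> (T <= U)%VS ->
  \dim_A U = (\dim_A T * \dim_T U)%N.
Proof.
move=> sAT sTU; have hA := adim_gt0 A.
have e1 := dim_sup_field sTU; have e2 := dim_sup_field sAT.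
by rewrite [in LHS]e1 [in X in (_ * X)%N %/ _]e2 mulnA mulnK // mulnC.
Qed.

Lemma dimK_gt0 (A T : {subfield L}) : (A <= T)%VS -> 0 < \dim_A T.
Proof.
move=> sAT; have h := adim_gt0 T; rewrite (dim_sup_field sAT) muln_gt0 in h.
by case/andP: h.
Qed.

Lemma r_gt0 : 0 < r. Proof. exact: dimK_gt0. Qed.

Lemma r_gt1 : 1 < r.
Proof.
rewrite ltn_neqAle r_gt0 andbT; apply/eqP=> h; apply: nKE.
have := dim_sup_field sKE; rewrite -h mul1n => hd.
apply: val_inj; apply/eqP; rewrite -(geq_leqif (dimv_leqif_eq sKE)) hd //.
Qed.

Lemma galT T : I T -> galois T E.
Proof. by case=> h1 h2; apply: galoisS galKE; rewrite h1 h2. Qed.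

Lemma le_dvd T U : I T -> I U -> (T <= U)%VS <-> (\dim_K T %| \dim_K U).
Proof.
move=> [sKT sTE] [sKU sUE]; split=> [sTU|].
  by rewrite (dimKT_mul sKT sTU) dvdn_mulr.
case/dvdnP=> k hk.
have /galois_fixedField eT := galT (conj sKT sTE).
have /galois_fixedField eU := galT (conj sKU sUE).
rewrite -eT -eU; apply: fixedFieldS.
rewrite -(cardSg_cyclic cycG (galS E sKU) (galS E sKT)).
rewrite -!galois_dim ?(galT (conj sKT sTE)) ?(galT (conj sKU sUE)) //.
apply/dvdnP; exists k.
have e1 := dimKT_mul sKT sTE; have e2 := dimKT_mul sKU sUE.
apply/eqP; rewrite -(eqn_pmul2l (dimK_gt0 sKT)) -e1 e2 hk.
by rewrite mulnCA mulnA.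
Qed.

Lemma ex_dim d : d %| r -> exists T, I T /\ \dim_K T = d.
Proof.
move=> dr; have d0 := dvdn_gt0 r_gt0 dr.
case/cyclicP: cycG => a ea.
have oa : #[a]%g = r by rewrite orderE -ea galois_dim.
have sub : <[(a ^+ d)%g]>%G \subset 'Gal(E / K)%g by rewrite ea cycleX.
exists (fixedField <[(a ^+ d)%g]>%G); split; first split.
- by rewrite -galois_connection.
- exact: fixedField_bound.
rewrite dim_fixed_galois // -divgS // -orderE orderXdiv oa //.
have q0 : 0 < \dim_K E %/ d by rewrite divn_gt0 // dvdn_leq // r_gt0.
by rewrite -galois_dim // -{1}(divnK dr) mulKn.
Qed.


Definition ev (T : {subfield L}) p := logn p (\dim_K T).

Lemma iE : I E. Proof. by split. Qed.
Lemma iK : I K. Proof. by split. Qed.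

Lemma dT_dvd T : I T -> \dim_K T %| r.
Proof. by case=> h1 h2; rewrite (dimKT_mul h1 h2) dvdn_mulr. Qed.

Lemma dim_ev T : I T -> \dim_K T = Dp P (ev T).
Proof. by move=> iT; rewrite /ev Dp_log ?r_gt0 ?dT_dvd. Qed.

Lemma ev_le T : I T -> {in P, forall p, ev T p <= logn p r}.
Proof. by move=> iT p _; apply: dvdn_leq_log; rewrite ?r_gt0 ?dT_dvd. Qed.

Lemma le_ev T U : I T -> I U ->
  (T <= U)%VS <-> {in P, forall p, ev T p <= ev U p}.
Proof.
move=> iT iU; rewrite (le_dvd iT iU); split=> [h p _|h].
  by apply: dvdn_leq_log; rewrite // dimK_gt0 //; case: iU.
by rewrite (dim_ev iT) (dim_ev iU); apply: Dp_dvd.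
Qed.

Lemma ex_ev v : {in P, forall p, v p <= logn p r} ->
  exists T, I T /\ {in P, ev T =1 v}.
Proof.
move=> hv; have dr : Dp P v %| r.
  by rewrite -{2}(Dp_log r_gt0 (dvdnn r)); apply: Dp_dvd.
have [T [iT dT]] := ex_dim dr; exists T; split=> // p pP.
by rewrite /ev dT logn_Dp ?pP ?primes_uniq ?all_prime_primes.
Qed.

Lemma eq_ev T U : I T -> I U -> (T = U) <-> {in P, ev T =1 ev U}.
Proof.
move=> iT iU; split=> [-> //|h].
apply: val_inj; apply/eqP; rewrite eqEsubv; apply/andP; split.
  by apply/(le_ev iT iU) => p pP; rewrite h.
by apply/(le_ev iU iT) => p pP; rewrite h.
Qed.

Lemma dim_evE T w : I T -> \dim_K T = Dp P w <-> {in P, ev T =1 w}.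
Proof.
by move=> iT; rewrite (dim_ev iT); apply: Dp_eq; rewrite ?primes_uniq ?all_prime_primes.
Qed.

Lemma ev_K : {in P, ev K =1 (fun _ => 0)}.
Proof. by move=> p _; rewrite /ev divnn adim_gt0 logn1. Qed.

Lemma cap_ev T U : I T -> I U -> I (T :&: U)%AS /\
  {in P, forall p, ev (T :&: U)%AS p = minn (ev T p) (ev U p)}.
Proof.
move=> iT iU; have iC : I (T :&: U)%AS.
  case: iT iU => [h1 h2] [h3 h4]; split; first by rewrite subv_cap h1 h3.
  exact: subv_trans (capvSl _ _) h2.
split=> //.
have [W [iW hW]] : exists W, I W /\ {in P, ev W =1 (fun p => minn (ev T p) (ev U p))}.
  apply: ex_ev => p pP; exact: leq_trans (geq_minl _ _) (ev_le iT pP).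
have WT : (W <= T)%VS by apply/(le_ev iW iT) => p pP; rewrite hW // geq_minl.
have WU : (W <= U)%VS by apply/(le_ev iW iU) => p pP; rewrite hW // geq_minr.
have WC : (W <= T :&: U)%VS by rewrite subv_cap WT WU.
have /(le_ev iW iC) h1 := WC.
have /(le_ev iC iT) h2 := capvSl T U.
have /(le_ev iC iU) h3 := capvSr T U.
move=> p pP; apply/eqP; rewrite eqn_leq leq_min h2 // h3 //= -(hW p pP) h1 //.
Qed.

Lemma prod_ev T U : I T -> I U -> I (T * U)%AS /\
  {in P, forall p, ev (T * U)%AS p = maxn (ev T p) (ev U p)}.
Proof.
move=> iT iU; have iC : I (T * U)%AS.
  case: iT iU => [h1 h2] [h3 h4]; split.
    exact: subv_trans h1 (field_subvMr _ _).
  exact: prodv_sub.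
split=> //.
have [W [iW hW]] : exists W, I W /\ {in P, ev W =1 (fun p => maxn (ev T p) (ev U p))}.
  by apply: ex_ev => p pP; rewrite geq_max !ev_le.
have TW : (T <= W)%VS by apply/(le_ev iT iW) => p pP; rewrite hW // leq_maxl.
have UW : (U <= W)%VS by apply/(le_ev iU iW) => p pP; rewrite hW // leq_maxr.
have /(le_ev iC iW) h1 := prodv_sub TW UW.
have /(le_ev iT iC) h2 := field_subvMr T U.
have /(le_ev iU iC) h3 := field_subvMl T U.
move=> p pP; apply/eqP; rewrite eqn_leq geq_max h2 // h3 // andbT -(hW p pP) h1 //.
Qed.


Lemma minimal_ev A T : I A -> I T -> minimal_ext A T <->
  exists2 p0, p0 \in P & {in P, forall p, ev T p = ev A p + (p == p0)}.
Proof.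
move=> iA iT; split.
  case=> [[sAT nAT] hmin]; have hle := (le_ev iA iT).1 sAT.
  have [p0 p0P lt0] : exists2 p0, p0 \in P & ev A p0 < ev T p0.
    case: (boolP (has (fun p => ev A p < ev T p) P)) => [/hasP // | /hasPn hn].
    exfalso; apply: nAT; apply/(eq_ev iA iT) => p pP.
    by apply/eqP; rewrite eqn_leq hle // leqNgt hn.
  exists p0 => //.
  have hb : {in P, forall p, ev A p + (p == p0) <= ev T p}.
    by move=> p pP; case: eqP => [->|_]; rewrite ?addn1 ?addn0 ?hle.
  have [W [iW hW]] := ex_ev (fun p pP => leq_trans (hb p pP) (ev_le iT pP)).
  have AW : (A <= W)%VS by apply/(le_ev iA iW) => p pP; rewrite hW // leq_addr.
  have WT : (W <= T)%VS by apply/(le_ev iW iT) => p pP; rewrite hW // hb.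
  case: (hmin W (conj AW WT)) => eW; last by move=> p pP; rewrite -eW hW.
  by move: (hW p0 p0P); rewrite eW eqxx addn1 => /n_Sn.
case=> p0 p0P h.
have AT : (A <= T)%VS by apply/(le_ev iA iT) => p pP; rewrite h // leq_addr.
split; first split=> //.
  by move=> eAT; move: (h p0 p0P); rewrite eAT eqxx addn1 => /n_Sn.
move=> W [AW WT].
have iW : I W by split; [exact: subv_trans (iA.1) AW | exact: subv_trans WT iT.2].
have hAW := (le_ev iA iW).1 AW; have hWT := (le_ev iW iT).1 WT.
case: (boolP (ev W p0 == ev A p0)) => [/eqP e0|ne0]; [left|right];
  apply/(eq_ev iW _) => // p pP; have := hAW p pP; have := hWT p pP;
  rewrite h //; case: (eqVneq p p0) => [epp|npp]; rewrite /= ?addn0 ?addn1;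
  try (by move=> *; apply/eqP; rewrite eqn_leq; apply/andP; split).
- by rewrite epp e0.
- move: ne0; rewrite -epp => ne0 h1 h2; apply/eqP; rewrite eqn_leq h1 /=.
  by rewrite ltn_neqAle eq_sym ne0 h2.
Qed.

Lemma is_socle_uniq (A B S1 S2 : {subfield L}) :
  is_socle A B S1 -> is_socle A B S2 -> S1 = S2.
Proof.
case=> [a1 [b1 c1]] [a2 [b2 c2]]; apply: val_inj; apply: subv_anti.
by rewrite c1 ?c2.
Qed.

Lemma socle_ev A : I A -> I (socle A E) /\
  {in P, forall p, ev (socle A E) p = minn (ev A p).+1 (logn p r)}.
Proof.
move=> iA.
have [W [iW hW]] := @ex_ev (fun p => minn (ev A p).+1 (logn p r))
  (fun p _ => geq_minr _ _).
suff sW : is_socle A E W.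
  have := epsilon_spec (inhabits A) (is_socle A E) (ex_intro _ W sW).
  by rewrite -/(socle A E) => /(is_socle_uniq sW) <-.
split; [|split].
- apply/(le_ev iA iW) => p pP; rewrite hW // leq_min leqnSn.
  exact: ev_le.
- move=> B [mAB sBE]; have iB : I B by split; [exact: subv_trans iA.1 mAB.1.1|].
  have [p0 p0P hB] := (minimal_ev iA iB).1 mAB.
  apply/(le_ev iB iW) => p pP; rewrite hW // leq_min ev_le // andbT hB //.
  by case: (p == p0); rewrite ?addn1 ?addn0.
move=> T sAT hT.
have iT' : I (T :&: E)%AS.
  by split; [rewrite subv_cap (subv_trans iA.1 sAT) sKE | exact: capvSr].
apply: subv_trans (capvSl T E); apply/(le_ev iW iT') => p pP.
have AT' : (A <= T :&: E)%VS by rewrite subv_cap sAT iA.2.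
have hAT' := (le_ev iA iT').1 AT'.
rewrite hW //; case: (ltnP (ev A p) (logn p r)) => lt.
  have hb : {in P, forall q, ev A q + (q == p) <= logn q r}.
    move=> q qP; case: eqP => [->|_]; rewrite ?addn1 ?addn0 //; exact: ev_le.
  have [B [iB hB]] := ex_ev hb.
  have mAB : minimal_ext A B by apply/(minimal_ev iA iB); exists p.
  have /hT BT : atom A E B by split => //; exact: iB.2.
  have /(le_ev iB iT') BT' : (B <= T :&: E)%VS by rewrite subv_cap BT iB.2.
  by apply: leq_trans (geq_minl _ _) _; have := BT' p pP; rewrite hB // eqxx addn1.
apply: leq_trans (geq_minr _ _) _; apply: leq_trans lt _; exact: hAT'.
Qed.

Lemma loewy_ev j : I (loewy K E j) /\
  {in P, forall p, ev (loewy K E j) p = minn j (logn p r)}.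
Proof.
elim: j => [|j [iS hS]] /=.
  by split; [exact: iK | move=> p pP; rewrite ev_K // min0n].
have [iS' hS'] := socle_ev iS; split=> // p pP; rewrite hS' // hS //.
lia.
Qed.


Definition fv v := epsilon (inhabits K) (fun T => I T /\ {in P, ev T =1 v}).

Lemma fvP v : {in P, forall p, v p <= logn p r} -> I (fv v) /\ {in P, ev (fv v) =1 v}.
Proof.
move=> hv; have [T hT] := ex_ev hv.
exact: (epsilon_spec (inhabits K) (fun T => I T /\ {in P, ev T =1 v}) (ex_intro _ T hT)).
Qed.

Lemma dim_inj T U : I T -> I U -> \dim_K T = \dim_K U -> T = U.
Proof.
by move=> iT iU; rewrite (dim_ev iU) (dim_evE _ iT) => h; apply/(eq_ev iT iU).
Qed.

Lemma prime_dvd p : p \in P -> p %| r.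
Proof. by rewrite mem_primes => /and3P[]. Qed.

Lemma al_gt0 p : p \in P -> 0 < logn p r.
Proof. by rewrite logn_gt0. Qed.

Lemma dim_ppow T p b : I T -> p \in P -> b <= logn p r ->
  (\dim_K T = (p ^ b)%N <-> {in P, forall q, ev T q = b * (q == p)}).
Proof.
move=> iT pP bp.
have pp : prime p by move: pP; rewrite mem_primes => /andP[].
have dr : p ^ b %| r by rewrite pfactor_dvdn // r_gt0.
rewrite -{1}(Dp_log r_gt0 dr) (dim_evE _ iT).
by split=> h q qP; rewrite h // lognX logn_prime.
Qed.

Lemma dim_prime T p : I T -> p \in P ->
  (\dim_K T = p <-> {in P, forall q, ev T q = (q == p)}).
Proof.
move=> iT pP; have := dim_ppow iT pP (al_gt0 pP); rewrite expn1 => ->.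
by split=> h q qP; rewrite h // mul1n.
Qed.

Lemma atom_ev T : atom K E T <->
  I T /\ exists2 p0, p0 \in P & {in P, forall q, ev T q = (q == p0)}.
Proof.
split.
  case=> mT sTE; have iT : I T by split=> //; exact: mT.1.1.
  have [p0 p0P h] := (minimal_ev iK iT).1 mT.
  by split=> //; exists p0 => // q qP; rewrite h // ev_K.
case=> iT [p0 p0P h]; split; last exact: iT.2.
by apply/(minimal_ev iK iT); exists p0 => // q qP; rewrite h // ev_K.
Qed.

Lemma part1a p : p \in P -> exists A : {subfield L}, (atom K E A /\ \dim_K A = p) /\
  forall B : {subfield L}, atom K E B -> \dim_K B = p -> B = A.
Proof.
move=> pP.
have hb : {in P, forall q, (q == p : nat) <= logn q r}.
  by move=> q qP; case: eqP => [->|]; rewrite ?al_gt0.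
have [iA hA] := fvP hb.
exists (fv (fun q => (q == p : nat))); split.
  by split; [apply/atom_ev; split=> //; exists p | apply/(dim_prime iA pP)].
move=> B /atom_ev [iB _] /(dim_prime iB pP) hB.
by apply/(eq_ev iB iA) => q qP; rewrite hA ?hB.
Qed.

Lemma part1b T : I T -> (atom K E T <-> exists2 p, p \in P & \dim_K T = p).
Proof.
move=> iT; split.
  by case/atom_ev=> _ [p pP h]; exists p => //; apply/(dim_prime iT pP).
by case=> p pP /(dim_prime iT pP) h; apply/atom_ev; split=> //; exists p.
Qed.

Lemma bigprod_aspace (A : nat -> {subfield L}) s : exists B : {subfield L},
  (B : {vspace L}) = (\big[@prodv F L/1%VS]_(p <- s) (A p : {vspace L}))%VS.
Proof.
elim: s => [|p s [B eB]]; first by exists 1%AS; rewrite big_nil.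
by exists (A p * B)%AS; rewrite big_cons -eB.
Qed.

Lemma big_sub (A : nat -> {subfield L}) s (T : {subfield L}) :
  (forall p, p \in s -> (A p <= T)%VS) ->
  (\big[@prodv F L/1%VS]_(p <- s) (A p : {vspace L}) <= T)%VS.
Proof.
elim: s => [|p s IH] h; first by rewrite big_nil sub1v.
rewrite big_cons prodv_sub ?h ?mem_head // IH // => q qs.
by apply: h; rewrite in_cons qs orbT.
Qed.

Lemma big_ge (A : nat -> {subfield L}) s p : p \in s ->
  (A p <= \big[@prodv F L/1%VS]_(q <- s) (A q : {vspace L}))%VS.
Proof.
elim: s => [|q s IH] //; rewrite in_cons big_cons.
have [B eB] := bigprod_aspace A s; rewrite -eB in IH *.
case: eqP => [-> _|_ /= ps]; first exact: field_subvMr.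
exact: subv_trans (IH ps) (field_subvMl _ _).
Qed.

Lemma part2 (A : nat -> {subfield L}) :
  (forall p, p \in P -> atom K E (A p) /\ \dim_K (A p) = p) ->
  (socle K E : {vspace L}) = (\big[@prodv F L/1%VS]_(p <- P) (A p : {vspace L}))%VS.
Proof.
move=> hA; have [B eB] := bigprod_aspace A P; rewrite -eB.
have [p0 p0P] : exists p0, p0 \in P.
  have : P != [::] by rewrite primes_eq0 -leqNgt r_gt1.
  by case: (primes r) => // p0 s _; exists p0; rewrite mem_head.
suff sB : is_socle K E B.
  have := epsilon_spec (inhabits K) (is_socle K E) (ex_intro _ B sB).
  by rewrite -/(socle K E) => /(is_socle_uniq sB) ->.
have AB p : p \in P -> (A p <= B)%VS by move=> pP; rewrite eB big_ge.
split; [|split].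
- have [/atom_ev [[h _] _] _] := hA p0 p0P.
  exact: subv_trans h (AB p0 p0P).
- move=> C aC; have iC : I C by case/atom_ev: aC.
  have [p pP dC] := (part1b iC).1 aC.
  have [A' [_ uA']] := part1a pP.
  have [aAp dAp] := hA p pP.
  by rewrite (uA' C aC dC) -(uA' _ aAp dAp) AB.
move=> T _ hT; rewrite eB; apply: big_sub => p pP.
by apply: hT; case: (hA p pP).
Qed.


Definition alpha := (\max_(p <- P) logn p r)%N.

Lemma alpha_le j : (alpha <= j) <-> (forall p, p \in P -> logn p r <= j).
Proof.
split=> [/bigmax_leqP_seq h p pP| h]; first exact: h.
by apply/bigmax_leqP_seq => p pP _; apply: h.
Qed.

Lemma le_alpha p : p \in P -> logn p r <= alpha.
Proof. by move=> pP; apply: (@leq_bigmax_seq _ _ xpredT (fun q => logn q r) p pP). Qed.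

Lemma loewy_E j : (loewy K E j = E) <-> (alpha <= j).
Proof.
have [iS hS] := loewy_ev j; rewrite alpha_le (eq_ev iS iE).
split=> h p pP; first by have := h p pP; rewrite hS // /ev; lia.
by rewrite hS // /ev; have := h p pP; lia.
Qed.

Lemma loewy_len : loewy_length K E alpha.
Proof.
split; first by apply/loewy_E.
by move=> j lj /loewy_E; rewrite leqNgt lj.
Qed.

Lemma loewy_len_uniq n : loewy_length K E n -> n = alpha.
Proof.
case=> /loewy_E h1 h2; apply/eqP; rewrite eqn_leq h1 andbT leqNgt.
by apply/negP=> /h2; apply; apply/loewy_E.
Qed.

Lemma minnE' j a : minn j a = if a < j then a else j.
Proof. by rewrite minnC. Qed.

Lemma part3dim j : \dim_K (loewy K E j) =
  (\prod_(p <- P) p ^ (if logn p r < j then logn p r else j))%N.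
Proof.
have [iS hS] := loewy_ev j; apply/(dim_evE _ iS) => p pP.
by rewrite hS // minnE'.
Qed.

Lemma part3atom j T : I T ->
  (atom (loewy K E j) (loewy K E j.+1) T <->
   exists p0, [/\ p0 \in P,
     (if logn p0 r < j then logn p0 r else j) < logn p0 r &
     \dim_K T = (\prod_(p <- P) p ^ (if p == p0
        then (if logn p r < j then logn p r else j).+1
        else (if logn p r < j then logn p r else j)))%N]).
Proof.
move=> iT; have [iS hS] := loewy_ev j; have [iS' hS'] := loewy_ev j.+1.
split.
  case=> /(minimal_ev iS iT) [p0 p0P h] /(le_ev iT iS') h2.
  exists p0; split=> //.
    have := h2 p0 p0P; rewrite h // hS // hS' // eqxx -!minnE'; lia.
  apply/(dim_evE _ iT) => p pP; rewrite h // hS // -!minnE'.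
  by case: (p == p0); rewrite ?addn1 ?addn0.
case=> p0 [p0P lt0 /(dim_evE _ iT) h]; split.
  apply/(minimal_ev iS iT); exists p0 => // p pP; rewrite h // hS // -!minnE'.
  by case: (p == p0); rewrite ?addn1 ?addn0.
apply/(le_ev iT iS') => p pP; rewrite h // hS' // -!minnE'.
move: lt0; rewrite -minnE'; case: eqP => [->|_] lt0; lia.
Qed.


Lemma boolean_ev A B : I A -> I B ->
  {in P, forall p, ev A p <= ev B p <= (ev A p).+1} -> boolean_ext A B.
Proof.
move=> iA iB hAB.
have iIn X : in_interval A B X -> I X.
  by case=> h1 h2; split; [exact: subv_trans iA.1 h1 | exact: subv_trans h2 iB.2].
split.
  move=> T U V hT hU hV; have iT := iIn _ hT; have iU := iIn _ hU; have iV := iIn _ hV.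
  have [iUV eUV] := prod_ev iU iV; have [iUV' eUV'] := cap_ev iU iV.
  have [iTU eTU] := cap_ev iT iU; have [iTV eTV] := cap_ev iT iV.
  have [iTU' eTU'] := prod_ev iT iU; have [iTV' eTV'] := prod_ev iT iV.
  have [i1 e1] := cap_ev iT iUV; have [i2 e2] := prod_ev iTU iTV.
  have [i3 e3] := prod_ev iT iUV'; have [i4 e4] := cap_ev iTU' iTV'.
  split.
    by apply/(eq_ev i1 i2) => p pP; rewrite e1 // e2 // eUV // eTU // eTV //; lia.
  by apply/(eq_ev i3 i4) => p pP; rewrite e3 // e4 // eUV' // eTU' // eTV' //; lia.
move=> V hV; have iV := iIn _ hV.
have hle := (le_ev iA iV).1 hV.1; have hle2 := (le_ev iV iB).1 hV.2.
have hb : {in P, forall p, ev A p + ev B p - ev V p <= logn p r}.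
  move=> p pP; have := ev_le iB pP; have := hle p pP; lia.
have [V' [iV' eV']] := ex_ev hb.
exists V'; split; [split|split].
- by apply/(le_ev iA iV') => p pP; rewrite eV' //; have := hle2 p pP; lia.
- by apply/(le_ev iV' iB) => p pP; rewrite eV' //; have := hle p pP; lia.
- have [i1 e1] := cap_ev iV iV'; apply/(eq_ev i1 iA) => p pP; rewrite e1 // eV' //.
  by have := hle p pP; have := hle2 p pP; have := hAB p pP; lia.
have [i1 e1] := prod_ev iV iV'; apply/(eq_ev i1 iB) => p pP; rewrite e1 // eV' //.
by have := hle p pP; have := hle2 p pP; have := hAB p pP; lia.
Qed.

Lemma part3bool j : boolean_ext (loewy K E j) (loewy K E j.+1).
Proof.
have [iS hS] := loewy_ev j; have [iS' hS'] := loewy_ev j.+1.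
by apply: boolean_ev => // p pP; rewrite hS // hS' //; lia.
Qed.

Lemma pi_ev T : I T -> T <> K -> (pi_irreducible K E T <->
  exists2 p, p \in P & exists b, [/\ 1 <= b, b <= logn p r &
     {in P, forall q, ev T q = b * (q == p)}]).
Proof.
move=> iT nTK; split.
  move=> hpi.
  have [p pP pT] : exists2 p, p \in P & 0 < ev T p.
    case: (boolP (has (fun p => 0 < ev T p) P)) => [/hasP // | /hasPn hn].
    exfalso; apply: nTK; apply/(eq_ev iT iK) => p pP.
    by rewrite ev_K //; move: (hn p pP); rewrite lt0n negbK => /eqP.
  case: (boolP (has (fun q => (q != p) && (0 < ev T q)) P)) => [/hasP [q qP /andP [nqp qT]] | /hasPn hn].
    have hb1 : {in P, forall x, (if x == p then ev T x else 0) <= logn x r}.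
      by move=> x xP; case: ifP => // _; exact: ev_le.
    have hb2 : {in P, forall x, (if x == p then 0 else ev T x) <= logn x r}.
      by move=> x xP; case: ifP => // _; exact: ev_le.
    have [i1 e1] := fvP hb1; have [i2 e2] := fvP hb2.
    have [i12 e12] := prod_ev i1 i2.
    have eT : T = (fv (fun x => if x == p then ev T x else 0) *
                   fv (fun x => if x == p then 0 else ev T x))%AS.
      apply/(eq_ev iT i12) => x xP; rewrite e12 // e1 // e2 //.
      by case: ifP => _; rewrite ?maxn0 ?max0n.
    case: (hpi _ _ i1 i2 eT) => eT'.
      by move: qT; rewrite eT' e1 // (negbTE nqp).
    by move: pT; rewrite eT' e2 // eqxx.
  exists p => //; exists (ev T p); split=> //; first exact: ev_le.
  move=> q qP; case: eqP => [->|/eqP nqp]; first by rewrite muln1.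
  by move: (hn q qP); rewrite nqp /= muln0 lt0n negbK => /eqP.
case=> p pP [b [b1 bp h]] T1 T2 i1 i2 eT.
have [i12 e12] := prod_ev i1 i2.
have hm q : q \in P -> ev T q = maxn (ev T1 q) (ev T2 q).
  by move=> qP; rewrite -e12 // -eT.
case: (boolP (ev T1 p == b)) => [/eqP e1b|n1b]; [left|right];
  apply/(eq_ev iT _) => // q qP; have := hm q qP; rewrite h //.
- case: eqP => [->|_]; rewrite ?muln1 ?muln0; first by rewrite e1b.
  lia.
- case: eqP => [->|_]; rewrite ?muln1 ?muln0; last by lia.
  by move: n1b => /eqP; lia.
Qed.


Lemma part5 T : I T -> T <> K -> (pi_irreducible K E T <->
  exists2 p, p \in P & exists b, [/\ (1 <= b)%N, (b <= logn p r)%N & \dim_K T = (p ^ b)%N]).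
Proof.
move=> iT nTK; rewrite (pi_ev iT nTK); split.
  case=> p pP [b [b1 bp h]]; exists p => //; exists b; split=> //.
  by apply/(dim_ppow iT pP bp).
case=> p pP [b [b1 bp h]]; exists p => //; exists b; split=> //.
by apply/(dim_ppow iT pP bp).
Qed.

Definition fd d := epsilon (inhabits K) (fun T => I T /\ \dim_K T = d).

Lemma fdP d : d %| r -> I (fd d) /\ \dim_K (fd d) = d.
Proof.
move=> dr; have [T hT] := ex_dim dr.
exact: (epsilon_spec (inhabits K) (fun T => I T /\ \dim_K T = d) (ex_intro _ T hT)).
Qed.

Lemma part6a : card_subfields I (size (divisors r)).
Proof.
exists (map fd (divisors r)); split; [|split]; last by rewrite size_map.
  rewrite map_inj_in_uniq ?divisors_uniq // => d1 d2.
  rewrite -!dvdn_divisors ?r_gt0 // => /fdP [_ h1] /fdP [_ h2] e.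
  by rewrite -h1 -h2 e.
move=> T; split.
  by case/mapP=> d; rewrite -dvdn_divisors ?r_gt0 // => /fdP [h _] ->.
move=> iT; apply/mapP; exists (\dim_K T); first by rewrite -dvdn_divisors ?r_gt0 ?dT_dvd.
by have [i1 e1] := fdP (dT_dvd iT); apply: dim_inj => //; rewrite e1.
Qed.

Lemma count_sum (a : pred nat) s : count a s = (\sum_(p <- s) (a p : nat))%N.
Proof. by elim: s => [|x s IH] /=; rewrite ?big_nil ?big_cons ?IH. Qed.

Lemma sum_lt n m : (\sum_(j < n) (j < m : nat))%N = minn m n.
Proof.
elim: n => [|n IH]; first by rewrite big_ord0 minn0.
rewrite big_ord_recr /= IH; case: ltnP => h; lia.
Qed.

Lemma part6c_sum : (\sum_(j < alpha) count (fun p => j < logn p r) P)%N =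
   (\sum_(p <- P) logn p r)%N.
Proof.
rewrite (eq_bigr (fun j : 'I_alpha => \sum_(p <- P) (j < logn p r : nat))%N);
  last by move=> j _; rewrite count_sum.
rewrite exchange_big /=; apply: eq_big_seq => p pP.
by rewrite sum_lt; apply/minn_idPl; apply: le_alpha.
Qed.

Lemma part6c j : card_subfields (atom (loewy K E j) (loewy K E j.+1))
  (count (fun p => j < logn p r) P).
Proof.
have [iS hS] := loewy_ev j; have [iS' hS'] := loewy_ev j.+1.
pose w (p q : nat) := (minn j (logn q r) + (q == p))%N.
have hb p : j < logn p r -> {in P, forall q, w p q <= logn q r}.
  by move=> jp q qP; rewrite /w; case: eqP => [->|_]; lia.
exists [seq fv (w p) | p <- [seq p <- P | j < logn p r]]; split; [|split].
- rewrite map_inj_in_uniq ?filter_uniq ?primes_uniq // => p1 p2.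
  rewrite !mem_filter => /andP[j1 p1P] /andP[j2 p2P] e.
  have [_ h1] := fvP (hb _ j1); have [_ h2] := fvP (hb _ j2).
  have := h1 p1 p1P; rewrite e h2 // /w eqxx; case: eqP => // _; lia.
- move=> T; split.
    case/mapP=> p; rewrite mem_filter => /andP[jp pP] ->.
    have [iT hT] := fvP (hb _ jp); split.
      apply/(minimal_ev iS iT); exists p => // q qP; by rewrite hT // hS.
    apply/(le_ev iT iS') => q qP; rewrite hT // hS' /w //.
    by case: eqP => [->|_]; lia.
  case=> mT TS'.
  have iT : I T by split; [exact: subv_trans iS.1 mT.1.1 | exact: subv_trans TS' iS'.2].
  have [p0 p0P h] := (minimal_ev iS iT).1 mT.
  have jp : j < logn p0 r.
    by have := (le_ev iT iS').1 TS' p0 p0P; rewrite h // hS // hS' // eqxx; lia.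
  apply/mapP; exists p0; first by rewrite mem_filter jp.
  have [i1 e1] := fvP (hb _ jp).
  by apply/(eq_ev iT i1) => q qP; rewrite e1 // h // hS.
by rewrite size_map size_filter.
Qed.

Lemma part6e : card_subfields
  (fun T : {subfield L} => [/\ I T, T <> K & pi_irreducible K E T])
  (\sum_(p <- P) logn p r)%N.
Proof.
pose w (p b q : nat) := (b * (q == p))%N.
have hb p b : b \in iota 1 (logn p r) -> {in P, forall q, w p b q <= logn q r}.
  rewrite mem_iota => /andP[_ h] q qP; rewrite /w; case: eqP => [->|_]; lia.
exists [seq fv (w p b) | p <- P, b <- iota 1 (logn p r)]; split; [|split].
- apply: allpairs_uniq_dep; rewrite ?primes_uniq //; first by move=> p _; exact: iota_uniq.
  move=> [p1 b1] [p2 b2] /allpairsPdep [x1 [y1 [x1P y1i [-> ->]]]].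
  move=> /allpairsPdep [x2 [y2 [x2P y2i [-> ->]]]] /= e.
  have [_ h1] := fvP (hb _ _ y1i); have [_ h2] := fvP (hb _ _ y2i).
  have := h1 x1 x1P; rewrite e h2 // /w eqxx muln1.
  move: y1i; rewrite mem_iota => /andP[y1pos _].
  case: eqP => [ex|_] /=; last by rewrite muln0 => ey; rewrite -ey in y1pos.
  by subst x2; rewrite muln1 => ->.
- move=> T; split.
    case/allpairsPdep=> [p [b [pP bi ->]]].
    have [iT hT] := fvP (hb _ _ bi).
    have b1 : 0 < b by move: bi; rewrite mem_iota => /andP[].
    have nTK : fv (w p b) <> K.
      by move=> eK; move: (hT p pP); rewrite eK ev_K // /w eqxx muln1 => e0; rewrite -e0 in b1.
    split=> //; apply/(pi_ev iT nTK); exists p => //; exists b; split=> //.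
    by move: bi; rewrite mem_iota => /andP[_]; rewrite add1n ltnS.
  case=> iT nTK /(pi_ev iT nTK) [p pP [b [b1 bp h]]].
  have bi : b \in iota 1 (logn p r) by rewrite mem_iota b1 add1n ltnS.
  have [i1 e1] := fvP (hb _ _ bi).
  have -> : T = fv (w p b) by apply/(eq_ev iT i1) => q qP; rewrite e1 // h.
  exact: (allpairs_f_dep (fun p b => fv (w p b)) pP bi).
rewrite size_allpairs_dep sumnE big_map; apply: eq_bigr => p _.
exact: size_iota.
Qed.


Lemma sum_strict T U : I T -> I U -> sub_strict T U ->
  (\sum_(p <- P) ev T p < \sum_(p <- P) ev U p)%N.
Proof.
move=> iT iU [sTU nTU]; have hle := (le_ev iT iU).1 sTU.
have [p0 p0P lt0] : exists2 p0, p0 \in P & ev T p0 < ev U p0.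
  case: (boolP (has (fun p => ev T p < ev U p) P)) => [/hasP // | /hasPn hn].
  exfalso; apply: nTU; apply/(eq_ev iT iU) => p pP.
  by apply/eqP; rewrite eqn_leq hle // leqNgt hn.
rewrite (bigD1_seq p0) ?primes_uniq // [X in _ < X](bigD1_seq p0) ?primes_uniq //=.
have h1 : (\sum_(p <- P | p != p0) ev T p <= \sum_(p <- P | p != p0) ev U p)%N.
  rewrite big_seq_cond [X in _ <= X]big_seq_cond; apply: leq_sum => p /andP[pP _].
  exact: hle.
lia.
Qed.

Lemma sum_le T : I T -> (\sum_(p <- P) ev T p <= \sum_(p <- P) logn p r)%N.
Proof.
move=> iT; rewrite big_seq [X in _ <= X]big_seq; apply: leq_sum => p pP.
exact: ev_le.
Qed.

Lemma chain_to n : forall v, {in P, forall p, v p <= logn p r} ->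
  (\sum_(p <- P) v p)%N = n ->
  exists c : nat -> {subfield L}, (forall i, i <= n -> I (c i)) /\
    (forall i, i < n -> sub_strict (c i) (c i.+1)) /\ c n = fv v.
Proof.
elim: n => [|n IH] v hv hs.
  exists (fun _ => fv v); split=> // i _; exact: (fvP hv).1.
have [p pP vp] : exists2 p, p \in P & 0 < v p.
  case: (boolP (has (fun p => 0 < v p) P)) => [/hasP // | /hasPn hn].
  move: hs; rewrite big1_seq // => i /andP[_ iP].
  by move: (hn i iP); rewrite lt0n negbK => /eqP.
pose v' q := v q - (q == p).
have hv' : {in P, forall q, v' q <= logn q r}.
  by move=> q qP; apply: leq_trans (leq_subr _ _) (hv q qP).
have hs' : (\sum_(q <- P) v' q)%N = n.
  move: hs; rewrite !(bigD1_seq p) ?primes_uniq //= /v' eqxx.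
  rewrite [in X in _ -> X](eq_bigr v); last by move=> q /negbTE ->; rewrite subn0.
  lia.
have [c [hc1 [hc2 hc3]]] := IH v' hv' hs'.
exists (fun i => if i <= n then c i else fv v); split; [|split].
- move=> i _; case: ifP => [/hc1 //|_]; exact: (fvP hv).1.
- move=> i; rewrite ltnS => lin; case: (ltnP i n) => [lt|ge].
    by rewrite (ltnW lt); apply: hc2.
  have ein : i = n by apply/eqP; rewrite eqn_leq lin ge.
  rewrite ein leqnn hc3.
  have [i1 e1] := fvP hv'; have [i2 e2] := fvP hv.
  split.
    apply/(le_ev i1 i2) => q qP; rewrite e1 // e2 //; exact: leq_subr.
  by move=> e; move: (e1 p pP); rewrite e e2 // /v' eqxx; lia.
by rewrite ltnn.
Qed.

Lemma part6d : lattice_length K E (\sum_(p <- P) logn p r)%N.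
Proof.
split.
  have [c [h1 [h2 _]]] := @chain_to _ (fun p => logn p r) (fun p _ => leqnn _) erefl.
  by exists c.
move=> l [c [h1 h2]].
have key i : i <= l -> i <= \sum_(p <- P) ev (c i) p.
  elim: i => [//|i IHi] il.
  have := sum_strict (h1 i (ltnW il)) (h1 i.+1 il) (h2 i il).
  by have := IHi (ltnW il); lia.
exact: leq_trans (key l (leqnn l)) (sum_le (h1 l (leqnn l))).
Qed.

Lemma P_ne : exists p, p \in P.
Proof.
have : P != [::] by rewrite primes_eq0 -leqNgt r_gt1.
by case: (primes r) => // p0 s _; exists p0; rewrite mem_head.
Qed.

Lemma alpha_gt0 : 0 < alpha.
Proof. by have [p pP] := P_ne; apply: leq_trans (al_gt0 pP) (le_alpha pP). Qed.

Lemma delta_ok p k : p \in P -> k <= logn p r ->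
  {in P, forall q, k * (q == p) <= logn q r}.
Proof. by move=> pP kp q qP; case: eqP => [->|_]; rewrite ?muln1 ?muln0. Qed.

Lemma bool_alpha : boolean_ext K E -> alpha = 1.
Proof.
case=> _ hc; apply/eqP; rewrite eqn_leq alpha_gt0 andbT; apply/alpha_le => p pP.
rewrite leqNgt; apply/negP => a2.
have [iV eV] := fvP (delta_ok pP (al_gt0 pP)).
have [V' [iV' [e1 e2]]] := hc _ iV.
have [i1 h1] := cap_ev iV iV'; have [i2 h2] := prod_ev iV iV'.
have := h1 p pP; have := h2 p pP; rewrite e1 e2 ev_K // eV // eqxx muln1.
rewrite /ev; lia.
Qed.

Lemma chain_m : chain_ext K E -> size P = 1.
Proof.
move=> hc; have [p0 p0P] := P_ne.
have us := primes_uniq r.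
case eP: (primes r) p0P us => [|p [|q s]] //= _.
rewrite in_cons negb_or => /andP[/andP[npq _] _].
have pP : p \in P by rewrite eP mem_head.
have qP : q \in P by rewrite eP !in_cons eqxx orbT.
have [iV eV] := fvP (delta_ok pP (al_gt0 pP)).
have [iW eW] := fvP (delta_ok qP (al_gt0 qP)).
case: (hc _ _ iV iW) => /(le_ev _ _) h.
  by have := h iV iW p pP; rewrite eV // eW // eqxx (negbTE npq).
by have := h iW iV q qP; rewrite eV // eW // eqxx eq_sym (negbTE npq).
Qed.

Lemma alpha1_bool : alpha = 1 -> boolean_ext K E.
Proof.
move=> a1; apply: boolean_ev; rewrite ?iK ?iE // => p pP; rewrite ev_K //.
have := le_alpha pP; rewrite a1 /ev; lia.
Qed.

Lemma m1_chain : size P = 1 -> chain_ext K E.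
Proof.
case eP: (primes r) => [|p [|q s]] // _ T U iT iU.
have pP : p \in P by rewrite eP mem_head.
case: (leqP (ev T p) (ev U p)) => h; [left|right]; apply/le_ev => //;
  rewrite eP => x; rewrite inE => /eqP ->; last exact: ltnW.
exact: h.
Qed.


Lemma pext_c : P_ext K E -> size P = 1 \/ alpha = 1.
Proof.
case=> n [ln hT]; have en := loewy_len_uniq ln; subst n.
case: (eqVneq (size P) 1) => [|hm]; [by left | right].
apply/eqP; rewrite eqn_leq alpha_gt0 andbT; apply/alpha_le => p0 p0P.
rewrite leqNgt; apply/negP => a2.
have [q0 q0P nq] : exists2 q0, q0 \in P & q0 != p0.
  move: hm p0P (primes_uniq r); case: (primes r) => [|x [|y s]] // _.
  move=> p0P /andP[]; rewrite in_cons negb_or => /andP[nxy _] _.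
  case: (eqVneq p0 x) => [->|npx].
    by exists y; rewrite ?in_cons ?eqxx ?orbT // eq_sym.
  by exists x; rewrite ?in_cons ?eqxx // eq_sym.
have [iT eT] := fvP (delta_ok p0P a2).
have [j [jn [h1 h2]]] := hT _ iT.
have [iS hS] := loewy_ev j; have [iS' hS'] := loewy_ev j.+1.
have := (le_ev iS iT).1 h1 q0 q0P; rewrite hS // eT // (negbTE nq) muln0.
have := (le_ev iT iS').1 h2 p0 p0P; rewrite hS' // eT // eqxx muln1.
have := al_gt0 q0P; lia.
Qed.

Lemma c_pext : size P = 1 \/ alpha = 1 -> P_ext K E.
Proof.
move=> hc; exists alpha; split; first exact: loewy_len.
move=> T iT; case: hc => [m1 | a1].
  have [p ep] : exists p, P = [:: p].
    by move: m1; case: (primes r) => [|x [|y s]] // _; exists x.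
  have pP : p \in P by rewrite ep mem_head.
  have ea : alpha = logn p r.
    apply/eqP; rewrite eqn_leq le_alpha // andbT; apply/alpha_le => q.
    by rewrite ep inE => /eqP ->.
  exists (minn (ev T p) (logn p r).-1); split.
    by rewrite ea; have := al_gt0 pP; lia.
  have [iS hS] := loewy_ev (minn (ev T p) (logn p r).-1).
  have [iS' hS'] := loewy_ev (minn (ev T p) (logn p r).-1).+1.
  have hTp := ev_le iT pP.
  split; [apply/(le_ev iS iT) | apply/(le_ev iT iS')]; rewrite ep => q;
    rewrite inE => /eqP ->; rewrite ?hS ?hS' ?ep ?mem_head //;
    have := al_gt0 pP; lia.
exists 0; split; first by rewrite a1.
split; first exact: iT.1.
have [iS' hS'] := loewy_ev 1.
apply/(le_ev iT iS') => p pP; rewrite hS' //.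
have := ev_le iT pP; have := le_alpha pP; rewrite a1; lia.
Qed.


Lemma all_parts :
  let r := (\dim_K E)%N in
  let alpha := (\max_(p <- primes r) logn p r)%N in
  let beta (j p : nat) := if (logn p r < j)%N then logn p r else j in
  (
      (forall p, p \in primes r ->
         exists A : {subfield L}, (atom K E A /\ \dim_K A = p) /\
           forall B : {subfield L}, atom K E B -> \dim_K B = p -> B = A)
      /\ (forall T : {subfield L}, in_interval K E T ->
            (atom K E T <-> exists2 p, p \in primes r & \dim_K T = p))) /\
      (
      (forall A : nat -> {subfield L},
         (forall p, p \in primes r -> atom K E (A p) /\ \dim_K (A p) = p) ->
         (socle K E : {vspace L}) = (\big[@prodv F L/1%VS]_(p <- primes r) (A p : {vspace L}))%VS)) /\
      ((exists n, loewy_length K E n) /\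
      (forall n, loewy_length K E n ->
         [/\ forall j, (j <= n)%N ->
               \dim_K (loewy K E j) = (\prod_(p <- primes r) p ^ beta j p)%N,
             forall j, (j < n)%N -> forall T : {subfield L}, in_interval K E T ->
               (atom (loewy K E j) (loewy K E j.+1) T <->
                exists p0, [/\ p0 \in primes r, (beta j p0 < logn p0 r)%N &
                  \dim_K T = (\prod_(p <- primes r)
                                p ^ (if p == p0 then (beta j p).+1 else beta j p))%N]),
             alpha = n &
             forall j, (j < n)%N -> boolean_ext (loewy K E j) (loewy K E j.+1)])) /\
      (forall T : {subfield L}, in_interval K E T -> T <> K ->
         (pi_irreducible K E T <->
          exists2 p, p \in primes r &
            exists b, [/\ (1 <= b)%N, (b <= logn p r)%N & \dim_K T = (p ^ b)%N])) /\
      [/\ card_subfields (in_interval K E) (size (divisors r)),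
          size (divisors r) = (\prod_(p <- primes r) (logn p r).+1)%N,
          (exists c : nat -> nat,
             (forall j, (j < alpha)%N ->
                card_subfields (atom (loewy K E j) (loewy K E j.+1)) (c j)) /\
             (\sum_(j < alpha) c j)%N = (\sum_(p <- primes r) logn p r)%N),
          lattice_length K E (\sum_(p <- primes r) logn p r)%N &
          card_subfields (fun T : {subfield L} => [/\ in_interval K E T, T <> K & pi_irreducible K E T])
            (\sum_(p <- primes r) logn p r)%N] /\
      (P_ext K E <-> boolean_ext K E \/ chain_ext K E) /\
      (boolean_ext K E \/ chain_ext K E <-> size (primes r) = 1%N \/ alpha = 1%N).
Proof.
move=> r0 alpha0 beta.
have ea : alpha0 = alpha by [].
rewrite /beta /alpha0 /r0.
split; [split|split; [|split; [split|split; [|split; [split|split]]]]].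
- exact: part1a.
- exact: part1b.
- exact: part2.
- by exists alpha; exact: loewy_len.
- move=> n ln; have en := loewy_len_uniq ln; subst n; split.
  + by move=> j _; exact: part3dim.
  + by move=> j _ T iT; exact: part3atom.
  + by [].
  + by move=> j _; exact: part3bool.
- exact: part5.
- exact: part6a.
- exact: size_divisors r_gt0.
- exists (fun j => count (fun p => j < logn p r) P); split.
    by move=> j _; exact: part6c.
  exact: part6c_sum.
- exact: part6d.
- exact: part6e.
- split=> [/pext_c [/m1_chain|/alpha1_bool] | [/bool_alpha|/chain_m] h];
    [by right | by left | apply: c_pext; by [right|left] ..].
- split=> [[/bool_alpha|/chain_m] | [/m1_chain|/alpha1_bool]]; by [right|left].
Qed.

End Cyc.

Theorem theorem8p131 (F : fieldType) (L : splittingFieldType F) (K E : {subfield L}) :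
  (K <= E)%VS -> K <> E -> galois K E -> cyclic 'Gal(E / K) ->
  let r := (\dim_K E)%N in
  let alpha := (\max_(p <- primes r) logn p r)%N in
  let beta (j p : nat) := if (logn p r < j)%N then logn p r else j in
  ((* (1) *)
      (forall p, p \in primes r ->
         exists A : {subfield L}, (atom K E A /\ \dim_K A = p) /\
           forall B : {subfield L}, atom K E B -> \dim_K B = p -> B = A)
      /\ (forall T : {subfield L}, in_interval K E T ->
            (atom K E T <-> exists2 p, p \in primes r & \dim_K T = p))) /\
      ((* (2) *)
      (forall A : nat -> {subfield L},
         (forall p, p \in primes r -> atom K E (A p) /\ \dim_K (A p) = p) ->
         (socle K E : {vspace L}) = (\big[@prodv F L/1%VS]_(p <- primes r) (A p : {vspace L}))%VS)) /\
      (* (3) and (4) *)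
      ((exists n, loewy_length K E n) /\
      (forall n, loewy_length K E n ->
         [/\ forall j, (j <= n)%N ->
               \dim_K (loewy K E j) = (\prod_(p <- primes r) p ^ beta j p)%N,
             forall j, (j < n)%N -> forall T : {subfield L}, in_interval K E T ->
               (atom (loewy K E j) (loewy K E j.+1) T <->
                exists p0, [/\ p0 \in primes r, (beta j p0 < logn p0 r)%N &
                  \dim_K T = (\prod_(p <- primes r)
                                p ^ (if p == p0 then (beta j p).+1 else beta j p))%N]),
             alpha = n &
             forall j, (j < n)%N -> boolean_ext (loewy K E j) (loewy K E j.+1)])) /\
      (* (5) *)
      (forall T : {subfield L}, in_interval K E T -> T <> K ->
         (pi_irreducible K E T <->
          exists2 p, p \in primes r &
            exists b, [/\ (1 <= b)%N, (b <= logn p r)%N & \dim_K T = (p ^ b)%N])) /\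
      (* (6) *)
      [/\ card_subfields (in_interval K E) (size (divisors r)),
          size (divisors r) = (\prod_(p <- primes r) (logn p r).+1)%N,
          (exists c : nat -> nat,
             (forall j, (j < alpha)%N ->
                card_subfields (atom (loewy K E j) (loewy K E j.+1)) (c j)) /\
             (\sum_(j < alpha) c j)%N = (\sum_(p <- primes r) logn p r)%N),
          lattice_length K E (\sum_(p <- primes r) logn p r)%N &
          card_subfields (fun T : {subfield L} => [/\ in_interval K E T, T <> K & pi_irreducible K E T])
            (\sum_(p <- primes r) logn p r)%N] /\
      (* (7) *)
      (P_ext K E <-> boolean_ext K E \/ chain_ext K E) /\
      (boolean_ext K E \/ chain_ext K E <-> size (primes r) = 1%N \/ alpha = 1%N).
Proof.
move=> sKE nKE galKE cycG; exact: all_parts.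
Qed.
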